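(* Let $S,T,W$ be as in the trilevel setting with contraction constant $r\in[0,1)$ of $S$, and set $\alpha_k=\min\{\frac{2}{(1-r)k},1\}$ for $k\ge1$ and $J=\lfloor\frac{2}{1-r}\rfloor$. Given $x^0\in\mathbb R^n$, define for $k\ge1$: $v^k=S(x^{k-1})$, $y^k=T(x^{k-1})$, $z^k=W(x^{k-1})$, and $x^k=\alpha_kv^k+(1-\alpha_k)\alpha_ky^k+(1-\alpha_k)^2z^k$. Let $x\in\mathrm{Fix}(W)$ and let $C_x,C_S,C_T\ge0$ be constants such that for all $k\ge0$: $\|x^k-x\|\le C_x$, $\|S(x^k)-x\|\le C_S+C_x$, $\|T(x^k)-x\|\le C_T+C_x$ (such constants exist). Then for every $k\ge1$, \[\|x^k-x^{k-1}\|\le\frac{(C_S+2C_T+5C_x)J}{(1-r)k},\qquad \|z^k-x^{k-1}\|\le\frac{(C_S+2C_T+5C_x)(J+2)}{(1-r)k}.\]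
   Context: Trilevel setting. Let $f_1,f_2:\mathbb R^n\to\mathbb R$ be convex and continuously differentiable with $L_{f_i}$-Lipschitz gradients, $g_1,g_2:\mathbb R^n\to(-\infty,+\infty]$ proper, lower semicontinuous and convex, $\phi_i=f_i+g_i$; $\omega:\mathbb R^n\to\mathbb R$ is $\mu$-strongly convex, continuously differentiable with $L_\omega$-Lipschitz gradient. $\mathrm{prox}_g(x)=\arg\min_u\{g(u)+\tfrac12\|u-x\|^2\}$. For $u\in(0,\tfrac{2}{L_\omega+\mu}]$, $t\in(0,1/L_{f_1}]$, $s\in(0,1/L_{f_2}]$: $S(x)=x-u\nabla\omega(x)$, $T(x)=\mathrm{prox}_{tg_1}(x-t\nabla f_1(x))$, $W(x)=\mathrm{prox}_{sg_2}(x-s\nabla f_2(x))$. $S$ is a contraction with constant $r=\sqrt{1-\tfrac{2u\mu L_\omega}{\mu+L_\omega}}$, assumed here to lie in $[0,1)$; $T,W$ are nonexpansive, and $\mathrm{Fix}(W)=\arg\min\phi_2\neq\emptyset$. *)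

(* Defs.v *)
From HB Require Import structures.
From mathcomp Require Import all_boot all_order all_algebra.
From mathcomp Require Import all_classical all_reals all_analysis.
Set Implicit Arguments. Unset Strict Implicit. Unset Printing Implicit Defensive.
Import Order.TTheory GRing.Theory Num.Theory.
Import numFieldNormedType.Exports.
Local Open Scope ring_scope.

Section Defs.
Variables (R : realType) (n : nat).
Local Notation V := 'rV[R]_n.

Definition inner (x y : V) : R := \sum_(i < n) x ord0 i * y ord0 i.
Definition enorm (x : V) : R := Num.sqrt (inner x x).

Definition convex_fun (f : V -> R) : Prop :=
  forall (x y : V) (l : R), 0 < l < 1 ->
    f (l *: x + (1 - l) *: y) <= l * f x + (1 - l) * f y.

Definition strongly_convex (mu : R) (f : V -> R) : Prop :=
  forall (x y : V) (l : R), 0 < l < 1 ->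
    f (l *: x + (1 - l) *: y)
      <= l * f x + (1 - l) * f y - mu / 2 * l * (1 - l) * enorm (x - y) ^+ 2.

Definition is_gradient (f : V -> R) (gf : V -> V) : Prop :=
  forall x, differentiable f x /\ forall h, 'd f x h = inner (gf x) h.

Definition lipschitz_with (L : R) (F : V -> V) : Prop :=
  forall x y, enorm (F x - F y) <= L * enorm (x - y).

Definition proper_fun (g : V -> \bar R) : Prop :=
  (forall x, g x != -oo%E) /\ (exists x, g x != +oo%E).

Definition lsc_fun (g : V -> \bar R) : Prop :=
  forall (x : V) (a : R), (a%:E < g x)%E -> \forall y \near x, (a%:E < g y)%E.

Definition econvex_fun (g : V -> \bar R) : Prop :=
  forall (x y : V) (l : R), 0 < l < 1 ->
    (g (l *: x + (1 - l) *: y)%R <= l%:E * g x + (1 - l)%R%:E * g y)%E.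

Definition is_prox (c : R) (g : V -> \bar R) (w p : V) : Prop :=
  forall u, (c%:E * g p + (enorm (p - w) ^+ 2 / 2)%:E
             <= c%:E * g u + (enorm (u - w) ^+ 2 / 2)%:E)%E.

Definition nonexpansive (F : V -> V) : Prop :=
  forall x y, enorm (F x - F y) <= enorm (x - y).

Definition contraction_with (r : R) (F : V -> V) : Prop :=
  forall x y, enorm (F x - F y) <= r * enorm (x - y).

End Defs.

Definition alpha_step (R : realType) (r : R) (k : nat) : R :=
  Num.min (2 / ((1 - r) * k%:R)) 1.

(* Main.v *)
Require Import Defs.
From HB Require Import structures.
From mathcomp Require Import all_boot all_order all_algebra.
From mathcomp Require Import all_classical all_reals all_analysis.
From mathcomp Require Import ring lra.
Import Order.TTheory GRing.Theory Num.Theory.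
Import numFieldNormedType.Exports.
Local Open Scope ring_scope.

Section N.
Variables (R : realType) (n : nat).
Local Notation V := 'rV[R]_n.

Lemma innerDl (x y z : V) : inner (x + y) z = inner x z + inner y z.
Proof. rewrite /inner -big_split; apply: eq_bigr => i _; by rewrite !mxE mulrDl. Qed.
Lemma innerZl a (x y : V) : inner (a *: x) y = a * inner x y.
Proof. rewrite /inner mulr_sumr; apply: eq_bigr => i _; rewrite !mxE; ring. Qed.
Lemma innerC (x y : V) : inner x y = inner y x.
Proof. rewrite /inner; apply: eq_bigr => i _; ring. Qed.
Lemma innerDr (x y z : V) : inner z (x + y) = inner z x + inner z y.
Proof. by rewrite innerC innerDl !(innerC z). Qed.
Lemma innerZr a (x y : V) : inner y (a *: x) = a * inner y x.
Proof. by rewrite innerC innerZl innerC. Qed.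
Lemma mul_self_ge0 (a : R) : 0 <= a * a.
Proof. by rewrite -expr2 sqr_ge0. Qed.
Lemma inner_ge0 (x : V) : 0 <= inner x x.
Proof. rewrite /inner; apply: sumr_ge0 => i _; exact: mul_self_ge0. Qed.

Lemma inner0 (x y : V) : inner y y = 0 -> inner x y = 0.
Proof.
move=> h.
have hi : forall i, y ord0 i = 0.
  move=> i; have := @psumr_eq0P R _ xpredT (fun j => y ord0 j * y ord0 j) (fun j _ => mul_self_ge0 _) h i isT.
  by move/eqP; rewrite mulf_eq0 orbb => /eqP.
by rewrite /inner big1 // => i _; rewrite hi mulr0.
Qed.

Lemma cauchy_schwarz (x y : V) : inner x y ^+ 2 <= inner x x * inner y y.
Proof.
have [b0|bpos] := eqVneq (inner y y) 0.
  by rewrite (inner0 x y b0) b0 expr0n /= mulr0.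
have bp : 0 < inner y y by rewrite lt_def bpos inner_ge0.
set a := inner x y; set b := inner y y.
have := inner_ge0 (b *: x + (- a) *: y).
rewrite innerDl !innerDr !innerZl !innerZr.
rewrite (innerC y x) -/a -/b => h.
have e : b * (b * inner x x) + b * (- a * a) + (- a * (b * a) + - a * (- a * b))
   = b * (b * inner x x - a ^+ 2) by ring.
rewrite e pmulr_rge0 // subr_ge0 in h.
by rewrite mulrC.
Qed.

Lemma enorm_ge0 (x : V) : 0 <= enorm x.
Proof. exact: sqrtr_ge0. Qed.

Lemma enormZ a (x : V) : enorm (a *: x) = `|a| * enorm x.
Proof.
by rewrite /enorm innerZl innerZr mulrA -expr2 sqrtrM ?sqr_ge0 // sqrtr_sqr.
Qed.

Lemma enormD (x y : V) : enorm (x + y) <= enorm x + enorm y.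
Proof.
rewrite -(@ler_pXn2r _ 2) ?nnegrE ?addr_ge0 ?enorm_ge0 //.
rewrite /enorm sqr_sqrtr ?inner_ge0 // sqrrD !sqr_sqrtr ?inner_ge0 //.
rewrite innerDl !innerDr (innerC y x).
suff : inner x y <= Num.sqrt (inner x x) * Num.sqrt (inner y y) by lra.
rewrite -sqrtrM ?inner_ge0 //.
apply: le_trans (ler_norm _) _.
rewrite -sqrtr_sqr ler_sqrt ?mulr_ge0 ?inner_ge0 //.
exact: cauchy_schwarz.
Qed.

Lemma enormN (x : V) : enorm (- x) = enorm x.
Proof. by rewrite -scaleN1r enormZ normrN normr1 mul1r. Qed.

Lemma enormB (x y : V) : enorm (x - y) <= enorm x + enorm y.
Proof. by apply: le_trans (enormD _ _) _; rewrite enormN. Qed.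

Lemma enorm5 (c1 c2 c3 c4 c5 : R) (u1 u2 u3 u4 u5 : V) :
  enorm (c1 *: u1 + c2 *: u2 + c3 *: u3 + c4 *: u4 + c5 *: u5)
  <= `|c1| * enorm u1 + `|c2| * enorm u2 + `|c3| * enorm u3 + `|c4| * enorm u4
     + `|c5| * enorm u5.
Proof.
rewrite -!enormZ.
apply: le_trans (enormD _ _) _; apply: lerD => //.
apply: le_trans (enormD _ _) _; apply: lerD => //.
apply: le_trans (enormD _ _) _; apply: lerD => //.
exact: enormD.
Qed.

Lemma enorm6 (c1 c2 c3 c4 c5 c6 : R) (u1 u2 u3 u4 u5 u6 : V) :
  enorm (c1 *: u1 + c2 *: u2 + c3 *: u3 + c4 *: u4 + c5 *: u5 + c6 *: u6)
  <= `|c1| * enorm u1 + `|c2| * enorm u2 + `|c3| * enorm u3 + `|c4| * enorm u4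
     + `|c5| * enorm u5 + `|c6| * enorm u6.
Proof.
apply: le_trans (enormD _ _) _; apply: lerD; first exact: enorm5.
by rewrite enormZ.
Qed.

Lemma vec_id (a2 a1 : R) (s1 s0 t1 t0 w1 w0 x : V) :
 (a2 *: s1 + ((1-a2)*a2) *: t1 + ((1-a2)^+2) *: w1)
   - (a1 *: s0 + ((1-a1)*a1) *: t0 + ((1-a1)^+2) *: w0)
 = a2 *: (s1 - s0) + ((1-a2)*a2) *: (t1 - t0) + ((1-a2)^+2) *: (w1 - w0)
   + (a2 - a1) *: (s0 - x) + ((1-a2)*a2 - (1-a1)*a1) *: (t0 - x)
   + ((1-a2)^+2 - (1-a1)^+2) *: (w0 - x).
Proof. apply/rowP => i; rewrite !mxE; ring. Qed.

Lemma vec_id2 (a : R) (s t w y x : V) :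
  w - y = 1 *: ((a *: s + ((1-a)*a) *: t + ((1-a)^+2) *: w) - y)
   + a *: (w - x) + (- a) *: (s - x) + ((1-a)*a) *: (w - x)
   + (- ((1-a)*a)) *: (t - x).
Proof. apply/rowP => i; rewrite !mxE; ring. Qed.
End N.
Arguments enormB {R n}. Arguments enormD {R n}. Arguments enorm5 {R n}. Arguments enorm6 {R n}.
Arguments vec_id {R n}. Arguments vec_id2 {R n}. Arguments enorm_ge0 {R n}.

Lemma div_anti (R : realType) (Q K K' : R) :
  0 < Q -> 0 < K' -> K' <= K -> 2 / (Q * K) <= 2 / (Q * K').
Proof.
move=> hQ hK' hKK.
have hK : 0 < K by apply: lt_le_trans hKK.
rewrite ler_pdivrMr ?mulr_gt0 // mulrAC ler_pdivlMr ?mulr_gt0 //.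
by rewrite ler_pM2l // ler_pM2l.
Qed.

Lemma final_ineq (R : realType) (M J Q K D d g : R) :
  0 <= M -> 2 <= J -> 0 < Q -> 2 < K ->
  D <= M * J / (Q * (K - 1)) -> d <= 2 / (Q * (K - 1)) - 2 / (Q * K) ->
  0 <= g -> g = 1 - 2 / K -> 0 <= d ->
  g * D + d * M <= M * J / (Q * K).
Proof.
move=> hM hJ hQ hK hD hd hg0 hg hd0.
have hK1 : 0 < K - 1 by lra.
have hK0 : 0 < K by lra.
have h1 : g * D + d * M <= g * (M * J / (Q * (K - 1))) +
   (2 / (Q * (K - 1)) - 2 / (Q * K)) * M.
  apply: lerD; first exact: ler_wpM2l.
  exact: ler_wpM2r.
apply: le_trans h1 _.
have hQ0 : Q != 0 by rewrite gt_eqF.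
have hK0' : K != 0 by rewrite gt_eqF.
have hK10 : K - 1 != 0 by rewrite gt_eqF.
have e1 : g * (M * J / (Q * (K - 1))) + (2 / (Q * (K - 1)) - 2 / (Q * K)) * M
   = M / (Q * K * (K - 1)) * ((K - 2) * J + 2).
  by rewrite hg; field; rewrite hQ0 hK0' hK10.
have e2 : M * J / (Q * K) = M / (Q * K * (K - 1)) * (J * (K - 1)).
  by field; rewrite ?hQ0 ?hK0' ?hK10.
rewrite e1 e2; apply: ler_wpM2l.
  by apply: divr_ge0 => //; rewrite !mulr_ge0 // ltW.
have : (K - 2) * J + 2 = J * (K - 1) - (J - 2) by ring.
move=> ->; lra.
Qed.

Theorem mainTheorem15 (R : realType) (n : nat)
  (f1 f2 : 'rV[R]_n -> R) (gf1 gf2 : 'rV[R]_n -> 'rV[R]_n) (Lf1 Lf2 : R)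
  (g1 g2 : 'rV[R]_n -> \bar R)
  (om : 'rV[R]_n -> R) (gom : 'rV[R]_n -> 'rV[R]_n) (mu Lom : R)
  (u t s : R) (S T W : 'rV[R]_n -> 'rV[R]_n) (r : R)
  (* the trilevel setting *)
  (hf1c : convex_fun f1) (hf2c : convex_fun f2)
  (hf1g : is_gradient f1 gf1) (hf2g : is_gradient f2 gf2)
  (hLf1 : 0 < Lf1) (hLf2 : 0 < Lf2)
  (hf1L : lipschitz_with Lf1 gf1) (hf2L : lipschitz_with Lf2 gf2)
  (hg1p : proper_fun g1) (hg1l : lsc_fun g1) (hg1c : econvex_fun g1)
  (hg2p : proper_fun g2) (hg2l : lsc_fun g2) (hg2c : econvex_fun g2)
  (hmu : 0 < mu) (homc : strongly_convex mu om) (homg : is_gradient om gom)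
  (hLom : 0 < Lom) (homL : lipschitz_with Lom gom)
  (hu : 0 < u <= 2 / (Lom + mu)) (ht : 0 < t <= 1 / Lf1) (hs : 0 < s <= 1 / Lf2)
  (hS : forall x, S x = x - u *: gom x)
  (hT : forall x, is_prox t g1 (x - t *: gf1 x) (T x))
  (hW : forall x, is_prox s g2 (x - s *: gf2 x) (W x))
  (hr : r = Num.sqrt (1 - 2 * u * mu * Lom / (mu + Lom)))
  (hr01 : 0 <= r < 1)
  (* facts of the setting, as recalled in the paper *)
  (hScontr : contraction_with r S) (hTne : nonexpansive T) (hWne : nonexpansive W)
  (* the iteration *)
  (xs : nat -> 'rV[R]_n)
  (hxs : forall k : nat,
     xs k.+1 = alpha_step r k.+1 *: S (xs k)
               + ((1 - alpha_step r k.+1) * alpha_step r k.+1) *: T (xs k)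
               + ((1 - alpha_step r k.+1) ^+ 2) *: W (xs k))
  (* a fixed point of W and the bounding constants *)
  (x : 'rV[R]_n) (hx : W x = x) (Cx CS CT : R)
  (hCx0 : 0 <= Cx) (hCS0 : 0 <= CS) (hCT0 : 0 <= CT)
  (hCx : forall k, enorm (xs k - x) <= Cx)
  (hCS : forall k, enorm (S (xs k) - x) <= CS + Cx)
  (hCT : forall k, enorm (T (xs k) - x) <= CT + Cx) :
  let J : R := (Num.floor (2 / (1 - r)))%:~R in
  forall k : nat, (1 <= k)%N ->
    enorm (xs k - xs k.-1) <= (CS + 2 * CT + 5 * Cx) * J / ((1 - r) * k%:R) /\
    enorm (W (xs k.-1) - xs k.-1)
      <= (CS + 2 * CT + 5 * Cx) * (J + 2) / ((1 - r) * k%:R).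
Proof.
move=> J.
case/andP: hr01 => hr0 hr1.
set M := CS + 2 * CT + 5 * Cx.
set a := alpha_step r.
have hQ : 0 < 1 - r by lra.
have hM0 : 0 <= M by rewrite /M; lra.
have ha0 : forall k, 0 <= a k.
  move=> k; rewrite /a /alpha_step le_min ler01 andbT.
  by apply: divr_ge0 => //; apply: mulr_ge0; [exact: ltW | exact: ler0n].
have ha1 : forall k, a k <= 1 by move=> k; rewrite /a /alpha_step ge_min lexx orbT.
have hale : forall k, a k <= 2 / ((1 - r) * k%:R)
  by move=> k; rewrite /a /alpha_step ge_min lexx.
have haeq : forall k, 2 < (1 - r) * k%:R -> a k = 2 / ((1 - r) * k%:R).
  move=> k hk; rewrite /a /alpha_step min_l //.
  rewrite ler_pdivrMr; last by apply: lt_trans hk.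
  by rewrite mul1r ltW.
have hJ2 : 2 <= J.
  rewrite /J; change (((2%:Z)%:~R : R) <= ((Num.floor (2 / (1 - r)))%:~R : R)).
  rewrite ler_int floor_ge_int; change ((2 : R) <= 2 / (1 - r)).
  rewrite ler_pdivlMr //; lra.
have hJk : forall k : nat, (1 - r) * k%:R <= 2 -> k%:R <= J.
  move=> k hk; rewrite /J.
  change (((k%:Z)%:~R : R) <= ((Num.floor (2 / (1 - r)))%:~R : R)).
  rewrite ler_int floor_ge_int; change ((k%:R : R) <= 2 / (1 - r)).
  by rewrite ler_pdivlMr // mulrC.
have hWx : forall y, enorm (W y - x) <= enorm (y - x)
  by move=> y; have := hWne y x; rewrite hx.
have caseA : forall m, (1 - r) * m.+1%:R <= 2 ->
    enorm (xs m.+1 - xs m) <= M * J / ((1 - r) * m.+1%:R).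
  move=> m hm; have hk := hJk _ hm.
  have hpos : 0 < (1 - r) * m.+1%:R by rewrite mulr_gt0 // ltr0Sn.
  rewrite ler_pdivlMr //.
  have h2 : enorm (xs m.+1 - xs m) <= M.
    have -> : xs m.+1 - xs m = (xs m.+1 - x) - (xs m - x).
      by rewrite opprB addrA subrK.
    apply: le_trans (enormB _ _) _.
    have := hCx m.+1; have := hCx m; rewrite /M; lra.
  have hD : (1 - r) * m.+1%:R <= J.
    have : 0 <= r * m.+1%:R by rewrite mulr_ge0.
    move: hk; rewrite mulrBl mul1r; lra.
  apply: ler_pM => //; [exact: enorm_ge0 | exact: ltW].
have P1 : forall m, enorm (xs m.+1 - xs m) <= M * J / ((1 - r) * m.+1%:R).
  elim=> [|p IH]; first by apply: caseA; rewrite mulr1; lra.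
  case: (lerP ((1 - r) * p.+2%:R) 2) => hc; first exact: caseA.
  have hK1 : (p.+2%:R : R) - 1 = p.+1%:R by rewrite -natr1 addrK.
  have hK2 : 2 < (p.+2%:R : R).
    have : r * p.+2%:R >= 0 by rewrite mulr_ge0.
    move: hc; rewrite mulrBl mul1r; lra.
  have e := vec_id (a p.+2) (a p.+1) (S (xs p.+1)) (S (xs p)) (T (xs p.+1)) (T (xs p))
     (W (xs p.+1)) (W (xs p)) x.
  rewrite -hxs -hxs in e.
  rewrite e; apply: le_trans (enorm6 _ _ _ _ _ _ _ _ _ _ _ _) _.
  set a2 := a p.+2; set a1 := a p.+1; set D := enorm (xs p.+1 - xs p).
  have ha2 : a2 = 2 / ((1 - r) * p.+2%:R) by exact: haeq.
  have ha12 : a2 <= a1.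
    rewrite /a1 /a /alpha_step le_min ha1 andbT ha2.
    by apply: div_anti => //; rewrite ler_nat.
  have ha1le : a1 <= 2 / ((1 - r) * (p.+2%:R - 1)) by rewrite hK1; exact: hale.
  have a20 := ha0 p.+2; have a10 := ha0 p.+1; have a21 := ha1 p.+2; have a11 := ha1 p.+1.
  rewrite -/a2 -/a1 in a20 a10 a21 a11.
  set d := a1 - a2.
  have hd0 : 0 <= d by rewrite /d subr_ge0.
  have hnd : `|a2 - a1| = d by rewrite distrC ger0_norm.
  have t1 : `|a2| * enorm (S (xs p.+1) - S (xs p)) <= a2 * (r * D).
    by rewrite ger0_norm //; apply: ler_wpM2l => //; exact: hScontr.
  have t2 : `|(1 - a2) * a2| * enorm (T (xs p.+1) - T (xs p)) <= ((1 - a2) * a2) * D.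
    rewrite ger0_norm ?mulr_ge0 ?subr_ge0 //; apply: ler_wpM2l; last exact: hTne.
    by rewrite mulr_ge0 ?subr_ge0.
  have t3 : `|(1 - a2) ^+ 2| * enorm (W (xs p.+1) - W (xs p)) <= ((1 - a2) ^+ 2) * D.
    rewrite ger0_norm ?sqr_ge0 //; apply: ler_wpM2l; last exact: hWne.
    exact: sqr_ge0.
  have t4 : `|a2 - a1| * enorm (S (xs p) - x) <= d * (CS + Cx).
    by rewrite hnd; apply: ler_wpM2l => //; exact: hCS.
  have t5 : `|(1 - a2) * a2 - (1 - a1) * a1| * enorm (T (xs p) - x) <= d * (CT + Cx).
    apply: ler_pM; [exact: normr_ge0 | exact: enorm_ge0 | | exact: hCT].
    have -> : (1 - a2) * a2 - (1 - a1) * a1 = (a2 - a1) * (1 - a2 - a1) by ring.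
    rewrite normrM hnd -[X in _ <= X]mulr1; apply: ler_wpM2l => //.
    rewrite ler_norml; apply/andP; split; lra.
  have t6 : `|(1 - a2) ^+ 2 - (1 - a1) ^+ 2| * enorm (W (xs p) - x) <= (2 * d) * Cx.
    apply: ler_pM; [exact: normr_ge0 | exact: enorm_ge0 | |].
      have -> : (1 - a2) ^+ 2 - (1 - a1) ^+ 2 = (a2 - a1) * (a2 + a1 - 2) by ring.
      rewrite normrM hnd mulrC; apply: ler_wpM2r => //.
      rewrite ler_norml; apply/andP; split; lra.
    exact: le_trans (hWx _) (hCx _).
  set g := a2 * r + (1 - a2) * a2 + (1 - a2) ^+ 2.
  have hsum : g * D + d * (CS + CT + 4 * Cx) <= g * D + d * M.
    by rewrite lerD2l; apply: ler_wpM2l => //; rewrite /M; lra.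
  apply: le_trans _ (le_trans hsum _).
    have : g * D + d * (CS + CT + 4 * Cx)
      = a2 * (r * D) + ((1 - a2) * a2) * D + ((1 - a2) ^+ 2) * D
        + d * (CS + Cx) + d * (CT + Cx) + (2 * d) * Cx by rewrite /g; ring.
    move=> ->; lra.
  rewrite -hK1 in IH.
  have hQ0 : 1 - r != 0 by rewrite gt_eqF.
  have hK0 : (p.+2%:R : R) != 0 by rewrite gt_eqF // (lt_trans _ hK2).
  apply: final_ineq => //.
  - by rewrite /d ha2; apply: lerB.
  - rewrite /g; apply: addr_ge0; [apply: addr_ge0|exact: sqr_ge0].
      exact: mulr_ge0.
    by apply: mulr_ge0; rewrite ?subr_ge0.
  - have -> : g = 1 - a2 * (1 - r) by rewrite /g; ring.
    rewrite ha2; field; rewrite hQ0 andbT; have hp : (0:R) <= p%:R by exact: ler0n.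
    have : (0:R) < 2 + p%:R by lra.
    by move/gt_eqF => ->.
move=> k; case: k => [//|m] _ /=.
split; first exact: P1.
have e := vec_id2 (a m.+1) (S (xs m)) (T (xs m)) (W (xs m)) (xs m) x.
rewrite -hxs in e.
rewrite e; apply: le_trans (enorm5 _ _ _ _ _ _ _ _ _ _) _.
set a1 := a m.+1; set b1 := (1 - a1) * a1.
have a10 : 0 <= a1 := ha0 m.+1.
have a11 : a1 <= 1 := ha1 m.+1.
have b10 : 0 <= b1 by rewrite /b1 mulr_ge0 ?subr_ge0.
have b1a : b1 <= a1 by rewrite /b1; nra.
rewrite normr1 mul1r !normrN !ger0_norm //.
have hWb := le_trans (hWx (xs m)) (hCx m).
have hSx := hCS m; have hTx := hCT m; have hP := P1 m.
have s1 : a1 * enorm (W (xs m) - x) <= a1 * Cx by apply: ler_wpM2l.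
have s2 : a1 * enorm (S (xs m) - x) <= a1 * (CS + Cx) by apply: ler_wpM2l.
have s3 : b1 * enorm (W (xs m) - x) <= b1 * Cx by apply: ler_wpM2l.
have s4 : b1 * enorm (T (xs m) - x) <= b1 * (CT + Cx) by apply: ler_wpM2l.
have s5 : b1 * (CT + 2 * Cx) <= a1 * (CT + 2 * Cx) by apply: ler_wpM2r => //; lra.
have s6 : a1 * (CS + CT + 4 * Cx) <= a1 * M by apply: ler_wpM2l => //; rewrite /M; lra.
have s7 : a1 * M <= 2 / ((1 - r) * m.+1%:R) * M by apply: ler_wpM2r => //; exact: hale.
have -> : M * (J + 2) / ((1 - r) * m.+1%:R)
   = M * J / ((1 - r) * m.+1%:R) + 2 / ((1 - r) * m.+1%:R) * M.
  by ring.
have e2 : a1 * Cx + a1 * (CS + Cx) + b1 * Cx + b1 * (CT + Cx)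
   = b1 * (CT + 2 * Cx) + a1 * (CS + 2 * Cx) by ring.
have e3 : a1 * (CT + 2 * Cx) + a1 * (CS + 2 * Cx) = a1 * (CS + CT + 4 * Cx) by ring.
rewrite -!addrA; apply: lerD => //.
apply: le_trans _ s7; apply: le_trans _ s6; rewrite -e3.
apply: le_trans _ (lerD s5 (lexx _)); rewrite -e2 -!addrA.
by apply: lerD => //; apply: lerD => //; apply: lerD.
Qed.
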